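(* Consider Algorithm 1 (described in the context) run on a strongly connected digraph $\mathcal{G}_d$ with edge bounds $1\le l_{ji}\le u_{ji}$, under any realization of transmission delays bounded by $\overline{\tau}<\infty$, and assume the integer circulation conditions hold: (i) $\lceil l_{ji}\rceil\le\lfloor u_{ji}\rfloor$ for every $(v_j,v_i)\in\mathcal{E}$, and (ii) for every $\mathcal{S}\subset\mathcal{V}$, $\sum_{(v_j,v_i)\in\mathcal{E}^-_{\mathcal{S}}}\lceil l_{ji}\rceil\le\sum_{(v_l,v_j)\in\mathcal{E}^+_{\mathcal{S}}}\lfloor u_{lj}\rfloor$. Then there exists $k_0$ such that for all $k\ge k_0$: $f_{ji}[k]=f_{ji}[k_0]$ with $l_{ji}\le f_{ji}[k]\le u_{ji}$ for every $(v_j,v_i)\in\mathcal{E}$, and $b_j[k]=0$ for every $v_j\in\mathcal{V}$.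
   Context: Setting: $\mathcal{G}_d=(\mathcal{V},\mathcal{E})$ is a strongly connected digraph, $\mathcal{V}=\{v_1,\dots,v_n\}$, $n\ge2$; an edge $(v_j,v_i)$ carries flow from $v_i$ to $v_j$. $\mathcal{N}_j^-=\{v_i:(v_j,v_i)\in\mathcal{E}\}$, $\mathcal{N}_j^+=\{v_l:(v_l,v_j)\in\mathcal{E}\}$, $\mathcal{D}_j=|\mathcal{N}_j^-|+|\mathcal{N}_j^+|$. For $\mathcal{S}\subset\mathcal{V}$: $\mathcal{E}^-_{\mathcal{S}}=\{(v_j,v_i)\in\mathcal{E}: v_j\in\mathcal{S},\ v_i\notin\mathcal{S}\}$, $\mathcal{E}^+_{\mathcal{S}}=\{(v_l,v_j)\in\mathcal{E}: v_j\in\mathcal{S},\ v_l\notin\mathcal{S}\}$. Each edge has real bounds $1\le l_{ji}\le u_{ji}$. Communication is bidirectional along every edge. Projection: $[x]_{ji}=\max\{\lceil l_{ji}\rceil,\min\{\lfloor u_{ji}\rfloor,x\}\}$. State: for each edge $(v_l,v_j)$, the tail $v_j$ holds the actual flow $f_{lj}[k]$; for each edge $(v_j,v_i)$, the head $v_j$ holds a perceived flow $f^{(p)}_{ji}[k]$. Actual balance $b_j[k]=\sum_{v_i\in\mathcal{N}_j^-}f_{ji}[k]-\sum_{v_l\in\mathcal{N}_j^+}f_{lj}[k]$; perceived balance $b^{(p)}_j[k]=\sum_{v_i\in\mathcal{N}_j^-}f^{(p)}_{ji}[k]-\sum_{v_l\in\mathcal{N}_j^+}f_{lj}[k]$. Algorithm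 1. Initialization: $f_{ji}[0]=f^{(p)}_{ji}[0]=\lceil l_{ji}\rceil$ for all edges; each $v_j$ fixes a cyclic order of its $\mathcal{D}_j$ incident (incoming and outgoing) edges and a pointer into it. Iteration $k=0,1,2,\dots$, at each node $v_j$: (1) compute $b^{(p)}_j[k]$. (2) If $b^{(p)}_j[k]>0$, starting at the pointer and cycling through the order, visit edges one at a time: at an outgoing edge $(v_l,v_j)$, if $f_{lj}[k]+c^{(j)}_{lj}[k]<\lfloor u_{lj}\rfloor$ add $1$ to $c^{(j)}_{lj}[k]$; at an incoming edge $(v_j,v_i)$, if $f^{(p)}_{ji}[k]+c^{(j)}_{ji}[k]>\lceil l_{ji}\rceil$ subtract $1$ from $c^{(j)}_{ji}[k]$ (the $c$'s start at $0$; edges at their limit are skipped); stop as soon as the total number of unit changes equals $b^{(p)}_j[k]$, leaving the pointer at the next edge. If $b^{(p)}_j[k]\le 0$, all $c^{(j)}[k]=0$. (3) $v_j$ transmits $c^{(j)}_{lj}[k]$ to each out-neighbor $v_l$ and $c^{(j)}_{ji}[k]$ to each in-neighbor $v_i$. A message sent at step $k$ over a link in a given direction is delivered at step $k+\tau$, where the integer $\tau\in[0,\overline{\tau}]$ is arbitrary (unknown, time-varying, independent across links and directions). (4) $v_j$ forms $\overline{c}^{(l)}_{lj}[k]$ (resp. $\overline{c}^{(i)}_{ji}[k]$) as the sum of all values $c^{(l)}_{lj}[k_0]$ (resp. $c^{(i)}_{ji}[k_0]$) sent by $v_l$ (resp. $v_i$) that are delivered at step $k$ (zero if none). (5)–(6)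 $f_{lj}[k+1]=[f_{lj}[k]+c^{(j)}_{lj}[k]+\overline{c}^{(l)}_{lj}[k]]_{lj}$ and $f^{(p)}_{ji}[k+1]=[f^{(p)}_{ji}[k]+c^{(j)}_{ji}[k]+\overline{c}^{(i)}_{ji}[k]]_{ji}$. *)

(* Defs.v *)
From HB Require Import structures.
From mathcomp Require Import all_boot all_order all_algebra.
Set Implicit Arguments. Unset Strict Implicit. Unset Printing Implicit Defensive.
Import Order.TTheory GRing.Theory Num.Theory.
Local Open Scope ring_scope.

(* Nodes are 'I_n; an edge (v_j, v_i) is the pair (j, i) : 'I_n * 'I_n and
   carries flow from i (its tail, e.2) to j (its head, e.1). *)
Definition edge (n : nat) := ('I_n * 'I_n)%type.

Section Alg.
Variables (R : archiRealFieldType) (n : nat).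
Variables (E : {set edge n}) (l u : edge n -> R).

Definition lo (e : edge n) : int := Num.ceil (l e).
Definition hi (e : edge n) : int := Num.floor (u e).

Definition proj (e : edge n) (x : int) : int := Num.max (lo e) (Num.min (hi e) x).

Definition balance (f : edge n -> int) (j : 'I_n) : int :=
  \sum_(e in E | e.1 == j) f e - \sum_(e in E | e.2 == j) f e.

Definition pbalance (f fp : edge n -> int) (j : 'I_n) : int :=
  \sum_(e in E | e.1 == j) fp e - \sum_(e in E | e.2 == j) f e.

Definition upd (c : edge n -> int) (e : edge n) (d : int) : edge n -> int :=
  fun e' => if e' == e then c e + d else c e'.

(* Returns the changes and the new
   pointer.  [fuel] only guarantees structural termination; it is chosen large
   enough (see node_step) never to run out when the circulation conditions hold. *)
Fixpoint rr (j : 'I_n) (f fp : edge n -> int) (s : seq (edge n))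
    (fuel : nat) (p : nat) (need : nat) (c : edge n -> int)
    : (edge n -> int) * nat :=
  match fuel with
  | 0%N => (c, p)
  | fuel'.+1 =>
    if need == 0%N then (c, p) else
    match s with
    | [::] => (c, p)
    | e0 :: _ =>
      let e := nth e0 s (p %% size s) in
      let p' := (p.+1 %% size s)%N in
      if e.2 == j then
        if f e + c e < hi e then rr j f fp s fuel' p' need.-1 (upd c e 1)
        else rr j f fp s fuel' p' need c
      else
        if fp e + c e > lo e then rr j f fp s fuel' p' need.-1 (upd c e (-1))
        else rr j f fp s fuel' p' need c
    end
  end.

Definition node_step (ord : 'I_n -> seq (edge n)) (j : 'I_n)
    (f fp : edge n -> int) (p : nat) : (edge n -> int) * nat :=
  let bp := pbalance f fp j in
  if 0 < bp then
    rr j f fp (ord j) ((absz bp).+1 * (size (ord j)).+1)%N p (absz bp) (fun _ => 0)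
  else (fun _ => 0, p).

(* An execution of Algorithm 1: f k e (actual flow held by tail e.2),
   fp k e (perceived flow held by head e.1), ptr k j (pointer of node j).
   dT e k : delay of the message sent at step k by the tail of e to its head;
   dH e k : delay of the message sent at step k by the head of e to its tail. *)
Definition is_run (ord : 'I_n -> seq (edge n)) (p0 : 'I_n -> nat)
    (dT dH : edge n -> nat -> nat)
    (f fp : nat -> edge n -> int) (ptr : nat -> 'I_n -> nat) : Prop :=
  let cT k e := (node_step ord e.2 (f k) (fp k) (ptr k e.2)).1 e in
  let cH k e := (node_step ord e.1 (f k) (fp k) (ptr k e.1)).1 e in
  (forall e, f 0%N e = lo e /\ fp 0%N e = lo e) /\
  (forall j, ptr 0%N j = p0 j) /\
  (forall k,
     (forall j, ptr k.+1 j = (node_step ord j (f k) (fp k) (ptr k j)).2) /\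
     (forall e,
        f k.+1 e = proj e (f k e + cT k e +
                      \sum_(k0 < k.+1 | (k0 + dH e k0 == k)%N) cH k0 e) /\
        fp k.+1 e = proj e (fp k e + cH k e +
                      \sum_(k0 < k.+1 | (k0 + dT e k0 == k)%N) cT k0 e))).

End Alg.

(* Main.v *)
Require Import Defs.
From HB Require Import structures.
From mathcomp Require Import all_boot all_order all_algebra.
From mathcomp Require Import zify ring lra.
From Stdlib Require Import Classical ClassicalEpsilon.
Import Order.TTheory GRing.Theory Num.Theory.
Set Implicit Arguments. Unset Strict Implicit. Unset Printing Implicit Defensive.
Local Open Scope ring_scope.
Section RR.
Variables (R : archiRealFieldType) (n : nat) (l u : edge n -> R).
Variables (j : 'I_n) (f fp : edge n -> int) (s : seq (edge n)).

Definition Inv (c : edge n -> int) :=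
  forall e, (e.2 == j -> 0 <= c e /\ (c e = 0 \/ f e + c e <= hi u e)) /\
            (e.2 != j -> c e <= 0 /\ (c e = 0 \/ lo l e <= fp e + c e)).

Definition hitc (e : edge n) (c : edge n -> int) :=
  (e.2 == j -> f e < hi u e -> 1 <= c e) /\ (e.2 != j -> lo l e < fp e -> c e <= -1).

Lemma upd_same (c : edge n -> int) e d : upd c e d e = c e + d.
Proof. by rewrite /upd eqxx. Qed.
Lemma upd_other (c : edge n -> int) e d e' : e' != e -> upd c e d e' = c e'.
Proof. by rewrite /upd => /negbTE ->. Qed.

Lemma Inv_up c e : Inv c -> e.2 == j -> f e + c e < hi u e -> Inv (upd c e 1).
Proof.
move=> Hc He Hlt e'; have [->|ne] := eqVneq e' e.
  rewrite upd_same He; split=> // _; split; last by right; lia.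
  by have [h _] := (Hc e).1 He; lia.
by rewrite !upd_other.
Qed.

Lemma Inv_dn c e : Inv c -> e.2 != j -> lo l e < fp e + c e -> Inv (upd c e (-1)).
Proof.
move=> Hc He Hlt e'; have [->|ne] := eqVneq e' e.
  rewrite upd_same (negbTE He); split=> // _; split; last by right; lia.
  by have [h _] := (Hc e).2 He; lia.
by rewrite !upd_other.
Qed.

Lemma rr_inv fuel p need c : Inv c -> Inv (rr l u j f fp s fuel p need c).1.
Proof.
elim: fuel p need c => [//|fuel IH] p need c Hc /=.
case: (need == 0%N) => //; case Es: s => [//|a s0]; rewrite -Es.
set e := nth _ _ _.
case: ifP => He.
  case: ifP => Hlt; apply: IH => //; exact: Inv_up.
case: ifP => Hlt; apply: IH => //; apply: Inv_dn => //; by rewrite He.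
Qed.

Lemma rr_mono fuel p need c e :
  let r := (rr l u j f fp s fuel p need c).1 in
  (e.2 == j -> c e <= r e) /\ (e.2 != j -> r e <= c e) /\ (e \notin s -> r e = c e).
Proof.
elim: fuel p need c => [|fuel IH] p need c /=; first by split; [|split].
case: (need == 0%N) => //.
case Es: s => [|a s0]; first by split; [|split].
set e0 := nth _ _ _.
have e0s : e0 \in s by rewrite Es mem_nth // ltn_pmod.
have G : forall c', (forall e', e' != e0 -> c' e' = c e') ->
   (e.2 == j -> c e <= c' e) -> (e.2 != j -> c' e <= c e) ->
  let r := (rr l u j f fp s fuel (p.+1 %% size s)%N need.-1 c').1 in
  (e.2 == j -> c e <= r e) /\ (e.2 != j -> r e <= c e) /\ (e \notin s -> r e = c e).
  move=> c' H1 H2 H3 r; have [I1 [I2 I3]] := IH (p.+1 %% size s)%N need.-1 c'.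
  split; [move=> h; exact: le_trans (H2 h) (I1 h)|split; [move=> h; exact: le_trans (I2 h) (H3 h)|]].
  move=> ns; rewrite /r I3 // H1 //; apply: contraNneq ns => ->; by [].
have G' : forall c', (forall e', e' != e0 -> c' e' = c e') ->
   (e.2 == j -> c e <= c' e) -> (e.2 != j -> c' e <= c e) ->
  let r := (rr l u j f fp s fuel (p.+1 %% size s)%N need c').1 in
  (e.2 == j -> c e <= r e) /\ (e.2 != j -> r e <= c e) /\ (e \notin s -> r e = c e).
  move=> c' H1 H2 H3 r; have [I1 [I2 I3]] := IH (p.+1 %% size s)%N need c'.
  split; [move=> h; exact: le_trans (H2 h) (I1 h)|split; [move=> h; exact: le_trans (I2 h) (H3 h)|]].
  move=> ns; rewrite /r I3 // H1 //; apply: contraNneq ns => ->; by [].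
rewrite -Es.
case: ifP => He; case: ifP => Hlt.
- apply: G; first by move=> e' ne; rewrite upd_other.
  + by move=> _; have [->|ne] := eqVneq e e0; [rewrite upd_same; lia|rewrite upd_other].
  + by move=> h; have [ee|ne] := eqVneq e e0; [by rewrite ee He in h|rewrite upd_other].
- by apply: G'.
- apply: G; first by move=> e' ne; rewrite upd_other.
  + by move=> h; have [ee|ne] := eqVneq e e0; [by rewrite ee He in h|rewrite upd_other].
  + by move=> _; have [->|ne] := eqVneq e e0; [rewrite upd_same; lia|rewrite upd_other].
- by apply: G'.
Qed.

Definition wt (c : edge n -> int) := \sum_(e <- s) (if e.2 == j then c e else - c e).

Lemma wt_upd c e d : uniq s -> e \in s ->
  wt (upd c e d) = wt c + (if e.2 == j then d else - d).
Proof.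
move=> us es; rewrite /wt !(bigD1_seq e) //= upd_same.
rewrite (eq_bigr (fun x => if x.2 == j then c x else - c x)); last first.
  by move=> x nx; rewrite upd_other.
by case: ifP => _; ring.
Qed.

Lemma rr_count fuel p need c : uniq s ->
  wt (rr l u j f fp s fuel p need c).1 <= wt c + (need%:Z).
Proof.
move=> us; elim: fuel p need c => [|fuel IH] p need c /=; first by lia.
case: eqP => [->|nz]; first by rewrite addr0.
case Es: s => [|a s0]; first by rewrite /=; lia.
rewrite -Es; set e0 := nth _ _ _.
have e0s : e0 \in s by rewrite /e0 mem_nth // ltn_pmod // Es.
case: ifP => He; case: ifP => Hlt.
- apply: le_trans (IH _ _ _) _; rewrite wt_upd // He.
  have -> : (need.-1)%:Z = need%:Z - 1 by rewrite predn_int //; lia.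
  lia.
- apply: le_trans (IH _ _ _) _; lia.
- apply: le_trans (IH _ _ _) _; rewrite wt_upd // He.
  have -> : (need.-1)%:Z = need%:Z - 1 by rewrite predn_int //; lia.
  lia.
- apply: le_trans (IH _ _ _) _; lia.
Qed.

Lemma rr_visit a s0 fuel p need c : s = a :: s0 -> Inv c ->
  exists m, [/\ (0 < need)%N -> (0 < fuel)%N -> (0 < m)%N,
   ((rr l u j f fp s fuel p need c).2 %% size s = (p + m) %% size s)%N &
   forall i, (i < m)%N -> hitc (nth a s ((p + i) %% size s)) (rr l u j f fp s fuel p need c).1].
Proof.
move=> Es; elim: fuel p need c => [|fuel IH] p need c Ic /=.
  by exists 0%N; split => //; rewrite addn0.
case: eqP => [->|nz]; first by exists 0%N; split => //; rewrite addn0.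
case Es': s => [|a' s1]; first by rewrite Es in Es'.
have [ea es0] : a' = a /\ s1 = s0 by move: Es'; rewrite Es => -[-> ->].
subst a' s1; rewrite -Es; set e0 := nth _ _ _.
have step : forall need' c', Inv c' -> (forall e, (e.2 == j -> c e <= c' e) /\ (e.2 != j -> c' e <= c e)) ->
   hitc e0 c' ->
   exists m, [/\ (0 < need)%N -> (0 < fuel.+1)%N -> (0 < m)%N,
   ((rr l u j f fp s fuel (p.+1 %% size s) need' c').2 %% size s = (p + m) %% size s)%N &
   forall i, (i < m)%N -> hitc (nth a s ((p + i) %% size s)) (rr l u j f fp s fuel (p.+1 %% size s) need' c').1].
  move=> need' c' Ic' Hm Hh; have [m [_ H2 H3]] := IH (p.+1 %% size s)%N need' c' Ic'.
  exists m.+1; split => //.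
    by rewrite H2 modnDml addSnnS.
  case=> [|i] Hi.
    rewrite addn0 -/e0; split.
      move=> h1 h2; have := (Hh.1 h1 h2); have [r1 _] := rr_mono fuel (p.+1 %% size s)%N need' c' e0.
      by have := r1 h1; lia.
    move=> h1 h2; have := (Hh.2 h1 h2); have [_ [r2 _]] := rr_mono fuel (p.+1 %% size s)%N need' c' e0.
    by have := r2 h1; lia.
  by have := H3 i Hi; rewrite modnDml addSnnS.
have e0s : e0 \in s by rewrite /e0 mem_nth // ltn_pmod // Es.
case: ifP => He; case: ifP => Hlt.
- apply: step; first exact: Inv_up.
  + move=> e; have [->|ne] := eqVneq e e0; first by rewrite upd_same He; split => // _; lia.
    by rewrite upd_other.
  + split; last by rewrite He.
    by move=> _ _; rewrite upd_same; have [h _] := (Ic e0).1 He; lia.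
- apply: (step _ c Ic); first by move=> e; split => _; lia.
  split; last by rewrite He.
  by move=> _ h; have [h1 _] := (Ic e0).1 He; lia.
- apply: step; first by apply: Inv_dn => //; rewrite He.
  + move=> e; have [->|ne] := eqVneq e e0; first by rewrite upd_same He; split => // _; lia.
    by rewrite upd_other.
  + split; first by rewrite He.
    by move=> _ _; rewrite upd_same; have [h _] := (Ic e0).2 (negbT He); lia.
- apply: (step _ c Ic); first by move=> e; split => _; lia.
  split; first by rewrite He.
  by move=> _ h; have [h1 _] := (Ic e0).2 (negbT He); lia.
Qed.

End RR.
Section Main.
Variables (R : archiRealFieldType) (n : nat) (E : {set edge n}) (l u : edge n -> R)
  (taubar : nat) (ord : 'I_n -> seq (edge n)) (p0 : 'I_n -> nat)
  (dT dH : edge n -> nat -> nat) (f fp : nat -> edge n -> int) (ptr : nat -> 'I_n -> nat).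
Hypothesis Hloop : forall e, e \in E -> e.1 != e.2.
Hypothesis Hord : forall j, uniq (ord j) /\
     forall e, (e \in ord j) = (e \in E) && ((e.1 == j) || (e.2 == j)).
Hypothesis Hdel : forall e k, (dT e k <= taubar)%N /\ (dH e k <= taubar)%N.
Hypothesis Hlh : forall e, e \in E -> lo l e <= hi u e.
Hypothesis Hrun : is_run E l u ord p0 dT dH f fp ptr.

Lemma HloopS e : e \in E -> e.2 != e.1.
Proof. by move=> eE; rewrite eq_sym Hloop. Qed.

Definition act k j := 0 < pbalance E (f k) (fp k) j.
Definition cc k j := (node_step E l u ord j (f k) (fp k) (ptr k j)).1.
Local Notation cT k e := (cc k e.2 e).
Local Notation cH k e := (cc k e.1 e).

Lemma run_f k e : f k.+1 e = proj l u e (f k e + cT k e +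
                      \sum_(k0 < k.+1 | (k0 + dH e k0 == k)%N) cH k0 e).
Proof. by case: Hrun => _ [_ H]; exact: ((H k).2 e).1. Qed.
Lemma run_fp k e : fp k.+1 e = proj l u e (fp k e + cH k e +
                      \sum_(k0 < k.+1 | (k0 + dT e k0 == k)%N) cT k0 e).
Proof. by case: Hrun => _ [_ H]; exact: ((H k).2 e).2. Qed.
Lemma run_0 e : f 0%N e = lo l e /\ fp 0%N e = lo l e.
Proof. by case: Hrun => H _; exact: H. Qed.
Lemma run_ptr k j : ptr k.+1 j = (node_step E l u ord j (f k) (fp k) (ptr k j)).2.
Proof. by case: Hrun => _ [_ H]; exact: (H k).1. Qed.

Lemma cc_noact k j e : ~~ act k j -> cc k j e = 0.
Proof. by rewrite /act /cc /node_step => /negbTE ->. Qed.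
Lemma ptr_noact k j : ~~ act k j -> ptr k.+1 j = ptr k j.
Proof. by rewrite run_ptr /act /node_step => /negbTE ->. Qed.

Lemma cc_Inv k j : Inv l u j (f k) (fp k) (cc k j).
Proof.
have I0 : Inv l u j (f k) (fp k) (fun=> 0) by move=> e; split=> _; (split; [by []|by left]).
rewrite /cc /node_step; case: ifP => _ //; exact: rr_inv.
Qed.

Lemma cc_out k j e : e \notin ord j -> cc k j e = 0.
Proof.
move=> ne; rewrite /cc /node_step; case: ifP => _ //.
by have [_ [_ ->]] := rr_mono l u j (f k) (fp k) (ord j) ((`|pbalance E (f k) (fp k) j|%N).+1 * (size (ord j)).+1) (ptr k j) `|pbalance E (f k) (fp k) j| (fun=> 0) e.
Qed.

Lemma cT_ge0 k e : 0 <= cT k e.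
Proof. exact: ((cc_Inv k e.2 e).1 (eqxx _)).1. Qed.
Lemma cH_le0 k e : e \in E -> cH k e <= 0.
Proof. by move=> eE; exact: ((cc_Inv k e.1 e).2 (HloopS eE)).1. Qed.
Lemma cT_bnd k e : cT k e = 0 \/ f k e + cT k e <= hi u e.
Proof. exact: ((cc_Inv k e.2 e).1 (eqxx _)).2. Qed.
Lemma cH_bnd k e : e \in E -> cH k e = 0 \/ lo l e <= fp k e + cH k e.
Proof. by move=> eE; exact: ((cc_Inv k e.1 e).2 (HloopS eE)).2. Qed.


Definition Ft k e := lo l e + \sum_(k0 < k) (cT k0 e + cH k0 e).
Definition gT k e := lo l e + \sum_(k0 < k) (cT k0 e + (if (k0 + dH e k0 < k)%N then cH k0 e else 0)).
Definition gH k e := lo l e + \sum_(k0 < k) (cH k0 e + (if (k0 + dT e k0 < k)%N then cT k0 e else 0)).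

Lemma Ft_le_gT k e : e \in E -> Ft k e <= gT k e.
Proof.
move=> eE; rewrite lerD2l; apply: ler_sum => i _; rewrite lerD2l.
by case: ifP => _ //; exact: cH_le0.
Qed.
Lemma gH_le_Ft k e : gH k e <= Ft k e.
Proof.
rewrite lerD2l; apply: ler_sum => i _; rewrite addrC lerD2r.
by case: ifP => _ //; exact: cT_ge0.
Qed.

Lemma if_split (x : int) a k :
  (if (a < k.+1)%N then x else 0) = (if (a < k)%N then x else 0) + (if a == k then x else 0).
Proof.
rewrite ltnS leq_eqVlt; have [->|ne] := eqVneq a k; first by rewrite ltnn /=; ring.
by rewrite /=; case: ifP => _; ring.
Qed.

Lemma gT_S k e : gT k.+1 e = gT k e + cT k e +
   \sum_(k0 < k.+1 | (k0 + dH e k0 == k)%N) cH k0 e.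
Proof.
rewrite /gT big_mkcond /= !big_ord_recr /= -!addrA; congr (_ + _).
rewrite (eq_bigr (fun i : 'I_k => (cT i e + (if (i + dH e i < k)%N then cH i e else 0)) +
   (if (i + dH e i == k)%N then cH i e else 0))); last first.
  by move=> i _; rewrite if_split addrA.
rewrite big_split /=.
have -> : (k + dH e k < k.+1)%N = (k + dH e k == k)%N.
  by apply/idP/idP; lia.
rewrite [\sum_(k0 < k.+1 | _) _]big_mkcond big_ord_recr /=.
case: ifP => _; ring.
Qed.

Lemma gH_S k e : gH k.+1 e = gH k e + cH k e +
   \sum_(k0 < k.+1 | (k0 + dT e k0 == k)%N) cT k0 e.
Proof.
rewrite /gH big_mkcond /= !big_ord_recr /= -!addrA; congr (_ + _).
rewrite (eq_bigr (fun i : 'I_k => (cH i e + (if (i + dT e i < k)%N then cT i e else 0)) +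
   (if (i + dT e i == k)%N then cT i e else 0))); last first.
  by move=> i _; rewrite if_split addrA.
rewrite big_split /=.
have -> : (k + dT e k < k.+1)%N = (k + dT e k == k)%N.
  by apply/idP/idP; lia.
rewrite [\sum_(k0 < k.+1 | _) _]big_mkcond big_ord_recr /=.
case: ifP => _; ring.
Qed.

Lemma Ft_S k e : Ft k.+1 e = Ft k e + cT k e + cH k e.
Proof. by rewrite /Ft big_ord_recr /=; ring. Qed.

Lemma proj_id e x : lo l e <= x -> x <= hi u e -> proj l u e x = x.
Proof.
move=> h1 h2; rewrite /proj.
by rewrite (@min_r _ _ (hi u e) x h2) (@max_r _ _ (lo l e) x h1).
Qed.

Lemma invariant k e : e \in E ->
  [/\ f k e = gT k e, fp k e = gH k e, gT k e <= hi u e & lo l e <= gH k e].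
Proof.
move=> eE; elim: k => [|k [I1 I2 I3 I4]].
  have [h1 h2] := run_0 e.
  by rewrite /gT /gH !big_ord0 !addr0 h1 h2; split => //; exact: Hlh.
have D1 : \sum_(k0 < k.+1 | (k0 + dH e k0 == k)%N) cH k0 e <= 0.
  by rewrite sumr_le0 // => i _; exact: cH_le0.
have D2 : 0 <= \sum_(k0 < k.+1 | (k0 + dT e k0 == k)%N) cT k0 e.
  by rewrite sumr_ge0 // => i _; exact: cT_ge0.
have U : gT k.+1 e <= hi u e.
  rewrite gT_S; apply: le_trans (_ : _ <= gT k e + cT k e) _; first by rewrite gerDl.
  by case: (cT_bnd k e) => h; [rewrite h addr0|rewrite -I1].
have L : lo l e <= gH k.+1 e.
  rewrite gH_S; apply: le_trans (_ : _ <= gH k e + cH k e) _; last by rewrite lerDl.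
  by case: (cH_bnd k eE) => h; [rewrite h addr0|rewrite -I2].
have M1 := Ft_le_gT k.+1 eE; have M2 := gH_le_Ft k.+1 e.
split => //.
- by rewrite run_f I1 -gT_S proj_id //; lia.
- by rewrite run_fp I2 -gH_S proj_id //; lia.
Qed.

Lemma fp_le_Ft k e : e \in E -> fp k e <= Ft k e.
Proof. by move=> eE; have [_ -> _ _] := invariant k eE; exact: gH_le_Ft. Qed.
Lemma Ft_le_f k e : e \in E -> Ft k e <= f k e.
Proof. by move=> eE; have [-> _ _ _] := invariant k eE; exact: Ft_le_gT. Qed.
Lemma lo_le_fp k e : e \in E -> lo l e <= fp k e.
Proof. by move=> eE; have [_ -> _ ?] := invariant k eE. Qed.
Lemma f_le_hi k e : e \in E -> f k e <= hi u e.
Proof. by move=> eE; have [-> _ ? _] := invariant k eE. Qed.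

Definition B k j := balance E (Ft k) j.

Lemma pbal_le k j : pbalance E (f k) (fp k) j <= B k j.
Proof.
rewrite /pbalance /B /balance lerB //; apply: ler_sum => e /andP [eE _].
  exact: fp_le_Ft.
exact: Ft_le_f.
Qed.

Lemma wt_conv j (c : edge n -> int) :
  wt j (ord j) c = \sum_(e in E | e.2 == j) c e - \sum_(e in E | e.1 == j) c e.
Proof.
have [U M] := Hord j.
rewrite /wt big_uniq //.
rewrite (eq_bigl (fun e => (e \in E) && ((e.1 == j) || (e.2 == j)))); last by move=> e; rewrite M.
rewrite (bigID (fun e => e.2 == j)) /=.
congr (_ + _).
  apply: eq_big => e; last by move=> /andP [_ ->].
  by case: (e \in E) => //=; case: (e.2 == j); rewrite ?orbT ?andbF.
rewrite -sumrN; apply: eq_big => e; last by move=> /andP [_ /negbTE ->].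
case eE: (e \in E) => //=.
case: eqP => [e1|] /=; last by case: (e.2 == j).
by rewrite -e1 HloopS.
Qed.

Lemma balance_ext (F G : edge n -> int) j : (forall e, F e = G e) -> balance E F j = balance E G j.
Proof. by move=> h; rewrite /balance; congr (_ - _); apply: eq_bigr => e _. Qed.
Lemma balanceD (F G : edge n -> int) j :
  balance E (fun e => F e + G e) j = balance E F j + balance E G j.
Proof. rewrite /balance !big_split /=; ring. Qed.

Lemma B_step k j : B k j - (if act k j then pbalance E (f k) (fp k) j else 0) <= B k.+1 j.
Proof.
have Own : \sum_(e in E | e.1 == j) cc k j e - \sum_(e in E | e.2 == j) cc k j e <=
           B k.+1 j - B k j.
  rewrite /B (balance_ext j (fun e => etrans (Ft_S k e) (esym (addrA _ _ _)))) balanceD addrAC subrr add0r /balance.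
  apply: lerB.
    apply: ler_sum => e /andP [_ /eqP <-]; rewrite lerDr; exact: cT_ge0.
  apply: ler_sum => e /andP [eE /eqP <-]; rewrite gerDl; exact: cH_le0.
have Wt : wt j (ord j) (cc k j) <= (if act k j then pbalance E (f k) (fp k) j else 0).
  case: ifP => A; last first.
    rewrite /wt big1 // => e _; rewrite cc_noact ?A //; by case: ifP; rewrite ?oppr0.
  rewrite /cc /node_step -/(act k j) A.
  apply: le_trans (rr_count l u j (f k) (fp k) _ _ _ _ (Hord j).1) _.
  rewrite /wt big1 ?add0r; last by move=> e _; case: ifP; rewrite ?oppr0.
  by rewrite abszE gtr0_norm.
move: Own Wt; rewrite wt_conv; lia.
Qed.

Lemma sum_balance (S : {set 'I_n}) (F : edge n -> int) :
  \sum_(j in S) balance E F j =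
  \sum_(e in E | (e.1 \in S) && (e.2 \notin S)) F e -
  \sum_(e in E | (e.2 \in S) && (e.1 \notin S)) F e.
Proof.
have P1 : forall g : edge n -> 'I_n,
   \sum_(j in S) \sum_(e in E | g e == j) F e = \sum_(e in E | g e \in S) F e.
  move=> g; rewrite (partition_big g (fun j => j \in S)) /=; last by move=> e /andP [].
  apply: eq_bigr => j jS; apply: eq_bigl => e.
  by case: eqP => [->|]; rewrite ?jS ?andbT ?andbF.
rewrite /balance sumrB !P1.
rewrite (bigID (fun e => e.2 \in S) (fun e => (e \in E) && (e.1 \in S))) /=.
rewrite [X in _ - X](bigID (fun e => e.1 \in S)) /=.
have -> : \sum_(i | ((i \in E) && (i.1 \in S)) && (i.2 \in S)) F i =
          \sum_(i | ((i \in E) && (i.2 \in S)) && (i.1 \in S)) F i.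
  by apply: eq_bigl => e; case: (e \in E); case: (e.1 \in S); case: (e.2 \in S).
have -> : \sum_(i | (i \in E) && (i.1 \in S) && (i.2 \notin S)) F i =
          \sum_(e in E | (e.1 \in S) && (e.2 \notin S)) F e.
  by apply: eq_bigl => e; rewrite andbA.
have -> : \sum_(i | (i \in E) && (i.2 \in S) && (i.1 \notin S)) F i =
          \sum_(e in E | (e.2 \in S) && (e.1 \notin S)) F e.
  by apply: eq_bigl => e; rewrite andbA.
ring.
Qed.

Lemma node_visit k x : act k x -> exists a s0, ord x = a :: s0 /\ exists m,
  [/\ (0 < m)%N, (ptr k.+1 x %% size (ord x) = (ptr k x + m) %% size (ord x))%N &
   forall i, (i < m)%N ->
     hitc l u x (f k) (fp k) (nth a (ord x) ((ptr k x + i) %% size (ord x))) (cc k x)].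
Proof.
move=> A.
have [Eo | [a [s0 Eo]]] : ord x = [::] \/ exists a s0, ord x = a :: s0.
  by case: (ord x) => [|a s0]; [left|right; exists a, s0].
  exfalso; move: A; rewrite /act /pbalance.
  have Z : forall e, e \in E -> (e.1 == x) || (e.2 == x) = false.
    by move=> e eE; have := (Hord x).2 e; rewrite Eo in_nil eE /= => <-.
  rewrite !big_pred0 ?subrr ?ltxx // => e; apply/negbTE; apply/negP => /andP [eE h];
    by have := Z e eE; rewrite h ?orbT.
exists a, s0; split => //.
have I0 : Inv l u x (f k) (fp k) (fun=> 0) by move=> e; split=> _; (split; [by []|by left]).
rewrite run_ptr /cc /node_step -/(act k x) A.
set bp := pbalance E (f k) (fp k) x.
have [m [H1 H2 H3]] := rr_visit ((`|bp|%N).+1 * (size (ord x)).+1) (ptr k x) `|bp|%N Eo I0.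
exists m; split => //; apply: H1 => //.
by rewrite absz_gt0; move: A; rewrite /act -/bp; case: eqP => // ->.
Qed.

Section Visit.
Variables (x : 'I_n) (e : edge n).
Hypothesis Hio : forall T, exists k, (T <= k)%N && act k x.
Hypothesis Hex : e \in ord x.

Local Notation S := (size (ord x)).
Let idx := index e (ord x).
Let dist p := ((idx + S - p %% S) %% S)%N.

Lemma S_gt0 : (0 < S)%N.
Proof. by case: (ord x) Hex. Qed.

Lemma idx_lt : (idx < S)%N.
Proof. by rewrite /idx index_mem. Qed.

Lemma dist_char p b : ((p + b) %% S = idx)%N -> (b < S)%N -> dist p = b.
Proof.
move=> H1 H2; rewrite /dist.
have S0 := S_gt0; have I := idx_lt.
set r := (p %% S)%N.
have rlt : (r < S)%N by rewrite ltn_pmod.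
have H1' : ((r + b) %% S = idx)%N by rewrite /r modnDml.
have Hd : ((r + b) %/ S < 2)%N by rewrite ltn_divLR //; lia.
have Hdq := divn_eq (r + b) S; rewrite H1' in Hdq.
case: ((r + b) %/ S)%N Hd Hdq => [|[|q]] // _ Hdq.
  have -> : (idx + S - r = b + S)%N by lia.
  by rewrite modnDr modn_small.
have -> : (idx + S - r = b)%N by lia.
by rewrite modn_small.
Qed.

Lemma dist_hit p : ((p + dist p) %% S = idx)%N.
Proof.
have S0 := S_gt0; have I := idx_lt; rewrite /dist modnDmr -modnDml.
have rlt : (p %% S < S)%N by rewrite ltn_pmod.
have -> : (p %% S + (idx + S - p %% S) = idx + S)%N by lia.
by rewrite modnDr modn_small.
Qed.

Lemma next_act k : exists k1, [/\ (k <= k1)%N, act k1 x & ptr k1 x = ptr k x].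
Proof.
have ex : exists k1, (k <= k1)%N && act k1 x by exact: Hio.
case: (ex_minnP ex) => k1 /andP [kk1 A] Hmin.
exists k1; split => //.
have : forall t, (k + t <= k1)%N -> ptr (k + t) x = ptr k x.
  elim=> [|t IH] h; first by rewrite addn0.
  rewrite addnS ptr_noact ?IH //; first lia.
  apply/negP => At; have := Hmin (k + t)%N; rewrite leq_addr At => /(_ isT); lia.
by move=> /(_ (k1 - k)%N); rewrite subnKC // => ->.
Qed.

Lemma visit_io T : exists k, [/\ (T <= k)%N, act k x &
   hitc l u x (f k) (fp k) e (cc k x)].
Proof.
suff : forall d k, (T <= k)%N -> (dist (ptr k x) <= d)%N -> exists k', [/\ (T <= k')%N, act k' x &
   hitc l u x (f k') (fp k') e (cc k' x)].
  by move=> /(_ _ T (leqnn _) (leqnn _)).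
elim=> [|d IH] k Tk Hd;
  have [k1 [kk1 A P]] := next_act k;
  have [a [s0 [Eo [m [m0 Hp Hh]]]]] := node_visit A.
- exists k1; split => //; first exact: leq_trans kk1.
  have := Hh 0%N m0; rewrite addn0.
  suff -> : nth a (ord x) (ptr k1 x %% S) = e by [].
  have := dist_hit (ptr k1 x); rewrite P; have -> : dist (ptr k x) = 0%N by lia.
  by rewrite addn0 => ->; rewrite nth_index.
- rewrite -P in Hd.
  case: (ltnP (dist (ptr k1 x)) m) => hm.
    exists k1; split => //; first exact: leq_trans kk1.
    have := Hh _ hm; rewrite dist_hit.
    by rewrite nth_index.
  apply: (IH k1.+1); first by apply: leq_trans (leqnSn _); exact: leq_trans kk1.
  have -> : dist (ptr k1.+1 x) = (dist (ptr k1 x) - m)%N; last by lia.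
  apply: dist_char; last first.
    have : (dist (ptr k1 x) < S)%N by rewrite /dist ltn_pmod // S_gt0.
    lia.
  by rewrite -modnDml Hp modnDml -addnA subnKC // dist_hit.
Qed.
End Visit.

Lemma gT_Ft K k e : (forall k0, (K <= k0)%N -> cH k0 e = 0) -> (K + taubar <= k)%N -> gT k e = Ft k e.
Proof.
move=> H Hk; rewrite /gT /Ft; congr (_ + _); apply: eq_bigr => i _.
case: ifP => c //; rewrite H ?addr0 //.
case: (ltnP i K) => // iK; move: c; have := (Hdel e i).2; lia.
Qed.

Lemma gH_Ft K k e : (forall k0, (K <= k0)%N -> cT k0 e = 0) -> (K + taubar <= k)%N -> gH k e = Ft k e.
Proof.
move=> H Hk; rewrite /gH /Ft; congr (_ + _); apply: eq_bigr => i _.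
case: ifP => c; first by rewrite addrC.
rewrite H ?addr0 ?add0r //.
case: (ltnP i K) => // iK; move: c; have := (Hdel e i).1; lia.
Qed.

Definition io x := forall T, exists k, (T <= k)%N && act k x.

Lemma io_or x : io x \/ exists K, forall k, (K <= k)%N -> ~~ act k x.
Proof.
case: (classic (io x)) => h; [by left|right].
have [T hT] := not_all_ex_not _ _ h; exists T => k Tk; apply/negP => A.
by apply: hT; exists k; rewrite Tk A.
Qed.

Lemma in_edge_lo e : e \in E -> io e.1 -> ~ io e.2 -> exists K, forall k, (K <= k)%N -> Ft k e = lo l e.
Proof.
move=> eE io1 nio2.
have [//|[K1 HK1]] := io_or e.2.
have cT0 : forall k, (K1 <= k)%N -> cT k e = 0 by move=> k h; apply: cc_noact; exact: HK1.
have mono : forall k t, (K1 <= k)%N -> Ft (k + t) e <= Ft k e.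
  move=> k; elim=> [|t IH] h; first by rewrite addn0.
  rewrite addnS Ft_S cT0; last by apply: leq_trans (leq_addr _ _).
  have := cH_le0 (k + t) eE; have := IH h; lra.
have geLo : forall k, lo l e <= Ft k e by move=> k; apply: le_trans (lo_le_fp k eE) (fp_le_Ft k eE).
have fpE : forall k, (K1 + taubar <= k)%N -> fp k e = Ft k e.
  by move=> k h; have [_ -> _ _] := invariant k eE; exact: gH_Ft cT0 h.
have ex : forall (d : nat) k, (K1 + taubar <= k)%N -> Ft k e - lo l e <= d%:Z ->
    exists k', (k <= k')%N /\ Ft k' e = lo l e.
  elim=> [|d IH] k hk hd.
    by exists k; split => //; have := geLo k; lia.
  have Hx : e \in ord e.1 by rewrite (Hord e.1).2 eE eqxx.
  have [kv [kkv _ Hh]] := visit_io io1 Hx k.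
  have M : Ft kv e <= Ft k e.
    by have := mono k (kv - k)%N (leq_trans (leq_addr _ _) hk); rewrite subnKC.
  have [E1|N1] := eqVneq (Ft kv e) (lo l e); first by exists kv.
  have lt1 : lo l e < fp kv e.
    rewrite fpE; last by apply: leq_trans hk kkv.
    by have := geLo kv; move: N1; rewrite lt_neqAle eq_sym => -> ->.
  have c1 := Hh.2 (HloopS eE) lt1.
  suff hd' : Ft kv.+1 e - lo l e <= d%:Z.
    have [k' [h1 h2]] := IH kv.+1 (leq_trans hk (leq_trans kkv (leqnSn _))) hd'.
    by exists k'; split => //; apply: leq_trans h1; apply: leq_trans kkv (leqnSn _).
  rewrite Ft_S cT0; last by apply: leq_trans (leq_trans (leq_addr _ _) hk) kkv.
  move: hd M c1; have -> : (d.+1)%:Z = d%:Z + 1 by rewrite -addn1 PoszD.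
  lra.
have hd0 : Ft (K1 + taubar)%N e - lo l e <= (`|Ft (K1 + taubar)%N e - lo l e|%N)%:Z by rewrite abszE ler_norm.
have [k' [h1 h2]] := ex _ (K1 + taubar)%N (leqnn _) hd0.
exists k' => k kk; apply/eqP; rewrite eq_le geLo andbT -h2.
have := mono k' (k - k')%N (leq_trans (leq_addr _ _) h1); rewrite subnKC //.
Qed.

Lemma out_edge_hi e : e \in E -> io e.2 -> ~ io e.1 -> exists K, forall k, (K <= k)%N -> Ft k e = hi u e.
Proof.
move=> eE io2 nio1.
have [//|[K1 HK1]] := io_or e.1.
have cH0 : forall k, (K1 <= k)%N -> cH k e = 0 by move=> k h; apply: cc_noact; exact: HK1.
have mono : forall k t, (K1 <= k)%N -> Ft k e <= Ft (k + t) e.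
  move=> k; elim=> [|t IH] h; first by rewrite addn0.
  rewrite addnS Ft_S cH0; last by apply: leq_trans (leq_addr _ _).
  have := cT_ge0 (k + t) e; have := IH h; lia.
have leHi : forall k, Ft k e <= hi u e by move=> k; apply: le_trans (Ft_le_f k eE) (f_le_hi k eE).
have fE : forall k, (K1 + taubar <= k)%N -> f k e = Ft k e.
  by move=> k h; have [-> _ _ _] := invariant k eE; exact: gT_Ft cH0 h.
have ex : forall (d : nat) k, (K1 + taubar <= k)%N -> hi u e - Ft k e <= d%:Z ->
    exists k', (k <= k')%N /\ Ft k' e = hi u e.
  elim=> [|d IH] k hk hd.
    by exists k; split => //; have := leHi k; lia.
  have Hx : e \in ord e.2 by rewrite (Hord e.2).2 eE eqxx orbT.
  have [kv [kkv _ Hh]] := visit_io io2 Hx k.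
  have M : Ft k e <= Ft kv e.
    by have := mono k (kv - k)%N (leq_trans (leq_addr _ _) hk); rewrite subnKC.
  have [E1|N1] := eqVneq (Ft kv e) (hi u e); first by exists kv.
  have lt1 : f kv e < hi u e.
    rewrite fE; last by apply: leq_trans hk kkv.
    by have := leHi kv; move: N1; rewrite lt_neqAle => -> ->.
  have c1 := Hh.1 (eqxx _) lt1.
  suff hd' : hi u e - Ft kv.+1 e <= d%:Z.
    have [k' [h1 h2]] := IH kv.+1 (leq_trans hk (leq_trans kkv (leqnSn _))) hd'.
    by exists k'; split => //; apply: leq_trans h1; apply: leq_trans kkv (leqnSn _).
  rewrite Ft_S cH0; last by apply: leq_trans (leq_trans (leq_addr _ _) hk) kkv.
  move: hd M c1; have -> : (d.+1)%:Z = d%:Z + 1 by rewrite -addn1 PoszD.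
  lra.
have hd0 : hi u e - Ft (K1 + taubar)%N e <= (`|hi u e - Ft (K1 + taubar)%N e|%N)%:Z by rewrite abszE ler_norm.
have [k' [h1 h2]] := ex _ (K1 + taubar)%N (leqnn _) hd0.
exists k' => k kk; apply/eqP; rewrite eq_le leHi /= -h2.
have := mono k' (k - k')%N (leq_trans (leq_addr _ _) h1); rewrite subnKC //.
Qed.

Lemma finite_max (T : finType) (Q : T -> nat -> Prop) :
  (forall t, exists K, forall k, (K <= k)%N -> Q t k) ->
  exists K, forall t k, (K <= k)%N -> Q t k.
Proof.
move=> H.
suff : forall s : seq T, exists K, forall t, t \in s -> forall k, (K <= k)%N -> Q t k.
  by move=> /(_ (enum T)) [K HK]; exists K => t k; apply: HK; rewrite mem_enum.
elim=> [|a s [K HK]]; first by exists 0%N.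
have [Ka HKa] := H a; exists (maxn K Ka) => t; rewrite inE => /orP [/eqP ->|ts] k h.
  by apply: HKa; apply: leq_trans h; rewrite leq_maxr.
by apply: HK => //; apply: leq_trans h; rewrite leq_maxl.
Qed.

Lemma B_pos_step k j : (0 <= B k j \/ act k j) -> 0 <= B k.+1 j.
Proof.
move=> h; have := B_step k j; have := pbal_le k j.
case A: (act k j) h => h; first by lra.
by case: h => // h; lra.
Qed.

Lemma B_nonneg t j : act t j -> forall k, (t < k)%N -> 0 <= B k j.
Proof.
move=> A k; elim: k => // k IH; rewrite ltnS leq_eqVlt => /orP [/eqP <-|h].
  by apply: B_pos_step; right.
by apply: B_pos_step; left; exact: IH.
Qed.

Definition pb (P : Prop) : bool := if excluded_middle_informative P then true else false.
Lemma pbP (P : Prop) : pb P <-> P.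
Proof. by rewrite /pb; case: excluded_middle_informative. Qed.

Hypothesis Hhoff : forall S : {set 'I_n},
     \sum_(e in E | (e.1 \in S) && (e.2 \notin S)) lo l e
       <= \sum_(e in E | (e.2 \in S) && (e.1 \notin S)) hi u e.

Lemma no_io j : ~ io j.
Proof.
move=> io0.
pose A : {set 'I_n} := [set x | pb (io x)].
have inA : forall x, x \in A <-> io x by move=> x; rewrite inE; exact: pbP.
have H3 : forall e : edge n, exists K, forall k, (K <= k)%N -> e \in E ->
    (io e.1 -> ~ io e.2 -> Ft k e = lo l e) /\ (io e.2 -> ~ io e.1 -> Ft k e = hi u e).
  move=> e; case eE: (e \in E); last by exists 0%N.
  case: (classic (io e.1)) => i1; case: (classic (io e.2)) => i2.
  - by exists 0%N => k _ _; split.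
  - have [K HK] := in_edge_lo eE i1 i2; exists K => k h _; split => // _ _; exact: HK.
  - have [K HK] := out_edge_hi eE i2 i1; exists K => k h _; split => // _ _; exact: HK.
  - by exists 0%N => k _ _; split.
have [K3 HK3] := finite_max H3.
have H4 : forall x : 'I_n, exists K, forall k, (K <= k)%N -> io x -> 0 <= B k x.
  move=> x; case: (classic (io x)) => ix; last by exists 0%N.
  have [t /andP [_ At]] := ix 0%N; exists t.+1 => k h _; exact: B_nonneg At k h.
have [K4 HK4] := finite_max H4.
have [k /andP [hk Ak]] := io0 (maxn K3 K4).
have hk3 : (K3 <= k)%N by apply: leq_trans hk; rewrite leq_maxl.
have hk4 : (K4 <= k)%N by apply: leq_trans hk; rewrite leq_maxr.
have jA : j \in A by apply/inA.
have Lo : B k j <= \sum_(x in A) B k x.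
  rewrite (bigD1 j) //= lerDl sumr_ge0 // => x /andP [xA _].
  by apply: HK4 => //; apply/inA.
have Up : \sum_(x in A) B k x <= 0.
  rewrite /B sum_balance.
  rewrite (eq_bigr (fun e => lo l e)); last first.
    move=> e /andP [eE /andP [e1 e2]]; apply: ((HK3 e k hk3 eE).1); first by apply/inA.
    by move=> h; move: e2; rewrite (iffRL (inA _) h).
  rewrite [X in _ - X](eq_bigr (fun e => hi u e)); last first.
    move=> e /andP [eE /andP [e1 e2]]; apply: ((HK3 e k hk3 eE).2); first by apply/inA.
    by move=> h; move: e2; rewrite (iffRL (inA _) h).
  by rewrite subr_le0 Hhoff.
have := pbal_le k j; move: Ak; rewrite /act; lra.
Qed.

Lemma all_stop : exists K, forall k j, (K <= k)%N -> ~~ act k j.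
Proof.
have H : forall j, exists K, forall k, (K <= k)%N -> ~~ act k j.
  by move=> j; case: (io_or j) => // /no_io.
have [K HK] := finite_max H; exists K => k j h; exact: HK.
Qed.

Lemma balance_extE (F G : edge n -> int) j : (forall e, e \in E -> F e = G e) -> balance E F j = balance E G j.
Proof. by move=> h; rewrite /balance; congr (_ - _); apply: eq_bigr => e /andP [eE _]; exact: h. Qed.

Lemma final : exists k0 : nat, forall k : nat, (k0 <= k)%N ->
    (forall e, e \in E ->
       f k e = f k0 e /\ l e <= (f k e)%:~R /\ (f k e)%:~R <= u e) /\
    (forall j, balance E (f k) j = 0).
Proof.
have [K HK] := all_stop.
have cT0 : forall k e, (K <= k)%N -> cT k e = 0 by move=> k e h; apply: cc_noact; exact: HK.
have cH0 : forall k e, (K <= k)%N -> cH k e = 0 by move=> k e h; apply: cc_noact; exact: HK.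
have FE : forall k e, e \in E -> (K + taubar <= k)%N -> f k e = Ft k e /\ fp k e = Ft k e.
  move=> k e eE h; have [-> -> _ _] := invariant k eE.
  by split; [apply: (gT_Ft (K := K)) | apply: (gH_Ft (K := K))] => // k0 h0; [exact: cH0|exact: cT0].
have Fc : forall t e, Ft (K + t) e = Ft K e.
  by move=> t e; elim: t => [|t IH]; rewrite ?addn0 // addnS Ft_S cT0 ?cH0 ?leq_addr // !addr0.
exists (K + taubar)%N => k hk.
have FK : forall e, Ft k e = Ft K e.
  by move=> e; have := Fc (k - K)%N e; rewrite subnKC // (leq_trans (leq_addr _ _) hk).
split.
  move=> e eE; have [f1 f2] := FE k e eE hk; have [f3 _] := FE _ e eE (leqnn _).
  split; first by rewrite f1 f3 FK Fc.
  split.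
    apply: le_trans (ceil_ge (l e)) _; rewrite ler_int -/(lo l e).
    by rewrite f1 -f2; exact: lo_le_fp.
  apply: le_trans _ (floor_le (u e)); rewrite ler_int -/(hi u e).
  exact: f_le_hi.
have BE : forall j, balance E (f k) j = B k j /\ pbalance E (f k) (fp k) j = B k j.
  move=> j; split; first by apply: balance_extE => e eE; exact: (FE k e eE hk).1.
  rewrite /pbalance /B /balance; congr (_ - _); apply: eq_bigr => e /andP [eE _].
    exact: (FE k e eE hk).2.
  exact: (FE k e eE hk).1.
have Ble : forall j, - B k j >= 0.
  move=> j; have := HK k j (leq_trans (leq_addr _ _) hk); rewrite /act (BE j).2.
  by rewrite -leNgt oppr_ge0.
have Bsum : \sum_(j in [set: 'I_n]) - B k j = 0.
  rewrite sumrN /B sum_balance !big_pred0 ?subrr ?oppr0 // => e;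
    by rewrite !in_setT /= !andbF.
move=> j; rewrite (BE j).1; apply/eqP; rewrite -oppr_eq0; apply/eqP.
by apply: (psumr_eq0P (fun i _ => Ble i) Bsum); rewrite in_setT.
Qed.

End Main.

Unset Implicit Arguments.

Theorem proposition4 (R : archiRealFieldType) (n : nat) (E : {set edge n})
    (l u : edge n -> R) (taubar : nat)
    (ord : 'I_n -> seq (edge n)) (p0 : 'I_n -> nat)
    (dT dH : edge n -> nat -> nat)
    (f fp : nat -> edge n -> int) (ptr : nat -> 'I_n -> nat) :
  (2 <= n)%N ->
  (* simple digraph: no self-loops *)
  (forall e, e \in E -> e.1 != e.2) ->
  (* strongly connected *)
  (forall x y : 'I_n, connect (fun a b : 'I_n => (b, a) \in E) x y) ->
  (* bounds 1 <= l_ji <= u_ji *)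
  (forall e, e \in E -> 1 <= l e /\ l e <= u e) ->
  (* each node's cyclic order lists each incident edge exactly once *)
  (forall j, uniq (ord j) /\
     forall e, (e \in ord j) = (e \in E) && ((e.1 == j) || (e.2 == j))) ->
  (* delays bounded by taubar *)
  (forall e k, (dT e k <= taubar)%N /\ (dH e k <= taubar)%N) ->
  (* integer circulation conditions *)
  (forall e, e \in E -> lo l e <= hi u e) ->
  (forall S : {set 'I_n},
     \sum_(e in E | (e.1 \in S) && (e.2 \notin S)) lo l e
       <= \sum_(e in E | (e.2 \in S) && (e.1 \notin S)) hi u e) ->
  is_run E l u ord p0 dT dH f fp ptr ->
  exists k0 : nat, forall k : nat, (k0 <= k)%N ->
    (forall e, e \in E ->
       f k e = f k0 e /\ l e <= (f k e)%:~R /\ (f k e)%:~R <= u e) /\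
    (forall j, balance E (f k) j = 0).
Proof.
move=> _ Hloop _ _ Hord Hdel Hlh Hhoff Hrun.
exact: (final Hloop Hord Hdel Hlh Hrun Hhoff).
Qed.
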